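(* Let $n\ge 1$ and let $\mathcal C\subset M_n(\mathbb{F}_2)$ be an additively closed set of $n\times n$ matrices over $\mathbb{F}_2$ (identified with $\mathbb{F}_2$-linear maps $\mathbb{F}_2^n\to\mathbb{F}_2^n$) such that $|\mathcal C|=2^{2n}$ and $\mathrm{rank}(A)\ge n-1$ for all $0\ne A\in\mathcal C$. Then there exist two presemifields $(\mathbb{F}_2^n,\star)$ and $(\mathbb{F}_2^n,\circ)$ such that \[ \mathcal C=\{x\mapsto a\star x-b\circ x \;:\; a,b\in\mathbb{F}_2^n\}. \] In particular, $\mathcal C$ contains an additively closed set $\mathcal C'$ with $|\mathcal C'|=2^n$ all of whose nonzero elements are invertible.
   Context: A presemifield $(\mathbb{F}_q^n,\circ)$ is the vector space $\mathbb{F}_q^n$ equipped with a multiplication $\circ$ that is biadditive (distributive on both sides, not necessarily associative, no identity required) and has no zero divisors: $x\circ y=0$ implies $x=0$ or $y=0$. Equivalently, it is a finite-dimensional (not necessarily associative) division algebra over a finite field. For a presemifield, the set $\{x\mapsto x\circ y: y\in\mathbb{F}_q^n\}$ is an additive set of $q^n$ matrices in $M_n(\mathbb{F}_q)$ all of whose nonzero elements are invertible (a semifield spread set). In the terminology of rank-metric codes, $\mathcal C$ in the claim is an additive maximum rank distance (MRD) code with minimum distance $n-1$. *)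

(* Defs.v *)
From HB Require Import structures.
From mathcomp Require Import all_boot all_order all_algebra.
Set Implicit Arguments. Unset Strict Implicit. Unset Printing Implicit Defensive.
Import GRing.Theory.
Local Open Scope ring_scope.

(* Vectors of F_2^n are row vectors 'rV['F_2]_n; a matrix A : 'M['F_2]_n is
   identified with the linear map x |-> x *m A. *)

Definition presemifield (n : nat) (mul : 'rV['F_2]_n -> 'rV['F_2]_n -> 'rV['F_2]_n) : Prop :=
  [/\ (forall a x y, mul a (x + y) = mul a x + mul a y),
      (forall a b x, mul (a + b) x = mul a x + mul b x)
    & (forall a x, mul a x = 0 -> a = 0 \/ x = 0)].

Definition add_closed_set (n : nat) (C : {set 'M['F_2]_n}) : Prop :=
  forall A B, A \in C -> B \in C -> A + B \in C.

(* Main.v *)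
Set Warnings "-notation-overridden,-ambiguous-paths,-deprecated".
Set Implicit Arguments. Unset Strict Implicit. Unset Printing Implicit Defensive.
Require Import Defs.
From HB Require Import structures.
From mathcomp Require Import all_boot all_order all_algebra.
From mathcomp Require Import zify.
Import GRing.Theory.
Local Open Scope ring_scope.

Lemma F2cases (c : 'F_2) : c = 0 \/ c = 1.
Proof. case: c => [[|[|m]]] //= H; [left|right]; exact: val_inj. Qed.

Lemma F2opp (c : 'F_2) : - c = c.
Proof. by case: (F2cases c) => ->; rewrite ?oppr0 //; apply/val_inj. Qed.

Lemma mxopp2 (a b : nat) (M : 'M['F_2]_(a, b)) : - M = M.
Proof. by apply/matrixP => i j; rewrite mxE F2opp. Qed.

Lemma mxaddxx (a b : nat) (M : 'M['F_2]_(a, b)) : M + M = 0.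
Proof. by rewrite -{2}(mxopp2 M) subrr. Qed.

Lemma mxadd_eq0 (a b : nat) (M N : 'M['F_2]_(a, b)) : (M + N == 0) = (M == N).
Proof. by rewrite -{1}(mxopp2 N) subr_eq0. Qed.

Lemma mxnat2 (a b k : nat) (M : 'M['F_2]_(a, b)) : (0 < k)%N -> M *+ (2 ^ k)%N = 0.
Proof.
case: k => // k _; rewrite expnS mulrnA mulr2n mxaddxx; exact: mul0rn.
Qed.

Lemma unit_ker (k : nat) (x : 'rV['F_2]_k) (A : 'M['F_2]_k) :
  A \in unitmx -> x *m A = 0 -> x = 0.
Proof. by move=> uA xA0; rewrite -(mulmxK uA x) xA0 mul0mx. Qed.

Lemma nonunit_ker (k : nat) (A : 'M['F_2]_k) :
  A \notin unitmx -> exists z : 'rV_k, z != 0 /\ z *m A = 0.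
Proof.
rewrite -row_free_unit -kermx_eq0 => nz.
have [i Hi] : exists i, row i (kermx A) != 0.
  apply/existsP; apply: contraNT nz => /existsPn H.
  by apply/eqP/row_matrixP => i; rewrite row0; apply/eqP; move: (H i); rewrite negbK.
exists (row i (kermx A)); split => //.
by rewrite -row_mul mulmx_ker row0.
Qed.

Lemma cardV (k : nat) : #|{: 'rV['F_2]_k}| = (2 ^ k)%N.
Proof. by rewrite card_mx card_Fp // mul1n. Qed.

Lemma sum_rV (k : nat) : (1 < k)%N -> \sum_(w : 'rV['F_2]_k) w = 0.
Proof.
move=> k1.
set s := \sum_(w : 'rV['F_2]_k) w.
apply/matrixP => o i; rewrite (ord1 o) mxE.
have [j ji] : exists j : 'I_k, j != i.
  case: (i =P Ordinal (ltn_trans (ltnSn 0) k1)) => [->|ne].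
    by exists (Ordinal k1); apply/eqP => /(congr1 val).
  by exists (Ordinal (ltn_trans (ltnSn 0) k1)); apply/eqP => E; apply: ne; rewrite E.
pose f (w : 'rV['F_2]_k) := w + w 0 i *: delta_mx 0 j.
have fi : forall w, (f w) 0 i = w 0 i.
  by move=> w; rewrite /f !mxE /= eq_sym (negbTE ji) mulr0 addr0.
have finv : involutive f.
  move=> w; rewrite /f fi -addrA -scalerDl.
  have -> : w 0 i + w 0 i = 0 by rewrite -{2}(F2opp (w 0 i)) subrr.
  by rewrite scale0r addr0.
have : s = s + s 0 i *: delta_mx 0 j.
  rewrite {1}/s (reindex_inj (inv_inj finv)) /= big_split /= -/s.
  congr (_ + _).
  rewrite -scaler_suml; congr (_ *: _).
  by rewrite /s summxE.
move/(congr1 (fun t => t - s)); rewrite subrr addrAC subrr add0r => /matrixP/(_ 0 j).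
by rewrite !mxE !eqxx mulr1 summxE.
Qed.

Section Main.
Variable n : nat.
Variable C : {set 'M['F_2]_n}.
Hypothesis n0 : (0 < n)%N.
Hypothesis Cadd : add_closed_set C.
Hypothesis Ccard : #|C| = (2 ^ (2 * n))%N.
Hypothesis Crank : forall A, A \in C -> A != 0 -> (n.-1 <= \rank A)%N.

Local Notation V := ('rV['F_2]_n).
Local Notation M := ('M['F_2]_n).

Lemma C0 : (0 : M) \in C.
Proof.
have : (0 < #|C|)%N by rewrite Ccard expn_gt0.
case/card_gt0P => A AC; by rewrite -(mxaddxx A) Cadd.
Qed.

Lemma n1 : (1 < n)%N.
Proof.
have : (#|C| <= #|{: M}|)%N by apply: max_card.
rewrite Ccard card_mx card_Fp // leq_exp2l //.
case: n n0 => [|[|k]] //.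
Qed.

Lemma ker_uniq A (x y : V) : A \in C -> A != 0 -> x != 0 -> y != 0 ->
  x *m A = 0 -> y *m A = 0 -> x = y.
Proof.
move=> AC A0 x0 y0 xA yA.
have rk := Crank AC A0.
have kx : (x <= kermx A)%MS by rewrite sub_kermx xA.
have ky : (y <= kermx A)%MS by rewrite sub_kermx yA.
have rx : \rank x = 1%N.
  by apply/eqP; rewrite eqn_leq rank_leq_row lt0n mxrank_eq0.
have rK : (\rank (kermx A) <= 1)%N by rewrite mxrank_ker; lia.
have Kx : (kermx A <= x)%MS.
  rewrite -(mxrank_leqif_sup kx) eqn_leq rx rK /= lt0n mxrank_eq0.
  rewrite andbT; apply: contra x0 => /eqP K0; by rewrite -submx0 -K0.
have /submxP [D yD] := submx_trans ky Kx.
have : D = (D 0 0)%:M by apply/matrixP => i j; rewrite (ord1 i) (ord1 j) mxE.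
move=> HD; rewrite HD mul_scalar_mx in yD.
case: (F2cases (D 0 0)) yD => -> ; first by rewrite scale0r => E; move: y0; rewrite E eqxx.
by rewrite scale1r.
Qed.

Lemma psi_inj (x z : V) A B : x != 0 -> z != 0 -> x != z -> A \in C -> B \in C ->
  x *m A = x *m B -> z *m A = z *m B -> A = B.
Proof.
move=> x0 z0 xz AC BC xe ze.
apply/eqP; rewrite -mxadd_eq0; apply/negPn/negP => nz.
have ABC : A + B \in C by rewrite Cadd.
have xAB : x *m (A + B) = 0 by rewrite mulmxDr xe mxaddxx.
have zAB : z *m (A + B) = 0 by rewrite mulmxDr ze mxaddxx.
by move: xz; rewrite (ker_uniq ABC nz x0 z0 xAB zAB) eqxx.
Qed.

Lemma psi_surj (x z : V) : x != 0 -> z != 0 -> x != z ->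
  forall v w, exists2 A, A \in C & x *m A = v /\ z *m A = w.
Proof.
move=> x0 z0 xz v w.
pose f (A : M) := (x *m A, z *m A).
have fi : {in C &, injective f}.
  move=> A B HA HB [e1 e2]; exact: (psi_inj x0 z0 xz HA HB e1 e2).
have : f @: C = setT.
  apply/eqP; rewrite eqEcard subsetT cardsT card_in_imset // Ccard card_prod cardV.
  by rewrite -expnD addnn mul2n leqnn.
move/setP/(_ (v, w)); rewrite in_setT => /imsetP [A AC [e1 e2]].
by exists A.
Qed.


Definition Zs (x : V) := [set z : V | (z != 0) && (z != x)].
Definition lam (x z v : V) : M := odflt 0 [pick A in C | (x *m A == v) && (z *m A == 0)].
Definition coset (x v : V) := [set A in C | x *m A == v].
Definition invs (x v : V) := [set A in coset x v | A \in unitmx].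
Definition sings (x v : V) := [set A in coset x v | A \notin unitmx].

Lemma lam_spec x z v : x != 0 -> z \in Zs x ->
  [/\ lam x z v \in C, x *m lam x z v = v & z *m lam x z v = 0].
Proof.
move=> x0; rewrite inE => /andP [z0 zx].
rewrite /lam; case: pickP => [A /and3P [AC /eqP e1 /eqP e2] | H] //=.
have xz : x != z by rewrite eq_sym.
have [A AC [e1 e2]] := psi_surj x0 z0 xz v 0.
by move: (H A); rewrite AC e1 e2 !eqxx.
Qed.

Lemma lam_uniq x z v A : x != 0 -> z \in Zs x -> A \in C ->
  x *m A = v -> z *m A = 0 -> A = lam x z v.
Proof.
move=> x0 zZ AC e1 e2; have [l1 l2 l3] := lam_spec v x0 zZ.
move: zZ; rewrite inE => /andP [z0 zx].
apply: (psi_inj x0 z0 _ AC l1); first by rewrite eq_sym.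
  by rewrite l2.
by rewrite l3.
Qed.

Lemma lamD x z v v' : x != 0 -> z \in Zs x -> lam x z (v + v') = lam x z v + lam x z v'.
Proof.
move=> x0 zZ; have [a1 a2 a3] := lam_spec v x0 zZ; have [b1 b2 b3] := lam_spec v' x0 zZ.
symmetry; apply: lam_uniq => //; first exact: Cadd.
  by rewrite mulmxDr a2 b2.
by rewrite mulmxDr a3 b3 addr0.
Qed.

Lemma sings_eq x v : x != 0 -> v != 0 -> sings x v = (fun z => lam x z v) @: Zs x.
Proof.
move=> x0 v0; apply/setP => A; apply/idP/idP.
  rewrite !inE => /andP [/andP [AC /eqP xA] nu].
  have [z [z0 zA]] := nonunit_ker nu.
  have zZ : z \in Zs x.
    rewrite inE z0 /=; apply: contra v0 => /eqP zx; by rewrite -xA -zx zA.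
  by apply/imsetP; exists z => //; apply: lam_uniq.
case/imsetP => z zZ ->; have [l1 l2 l3] := lam_spec v x0 zZ.
rewrite !inE l1 l2 eqxx /=; apply/negP => u.
by move: zZ; rewrite inE (unit_ker u l3) eqxx.
Qed.

Lemma lam_inj x v : x != 0 -> v != 0 -> {in Zs x &, injective (fun z => lam x z v)}.
Proof.
move=> x0 v0 z z' zZ z'Z /= e.
have [l1 l2 l3] := lam_spec v x0 zZ; have [m1 m2 m3] := lam_spec v x0 z'Z.
move: zZ z'Z; rewrite !inE => /andP [z0 _] /andP [z'0 _].
apply: (ker_uniq l1 _ z0 z'0 l3); last by rewrite e.
by apply: contra v0 => /eqP l0; rewrite -l2 l0 mulmx0.
Qed.

Lemma card_Zs x : x != 0 -> #|Zs x| = (2 ^ n - 2)%N.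
Proof.
move=> x0.
have -> : Zs x = ~: [set 0; x].
  by apply/setP => z; rewrite !inE negb_or.
have := cardsC [set (0 : V); x]; rewrite cards2 eq_sym x0 cardV => <-.
by rewrite addKn.
Qed.

Lemma Zs_ex x : x != 0 -> exists z, z \in Zs x.
Proof.
move=> x0; apply/set0Pn; rewrite -card_gt0 card_Zs //.
have : (4 <= 2 ^ n)%N by rewrite -[4%N]/(2 ^ 2)%N leq_exp2l // n1.
move: (2 ^ n)%N => N; rewrite /= => H1; lia.
Qed.

Lemma coset_img x z v : x != 0 -> z \in Zs x ->
  {in coset x v &, injective (mulmx z)} /\ mulmx z @: coset x v = setT.
Proof.
move=> x0; rewrite inE => /andP [z0 zx].
have xz : x != z by rewrite eq_sym.
split.
  move=> A B; rewrite !inE => /andP [HA /eqP e1] /andP [HB /eqP e2] e.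
  by apply: (psi_inj x0 z0 xz HA HB) => //; rewrite e1 e2.
apply/setP => w; rewrite in_setT; apply/imsetP.
have [A HA [e1 e2]] := psi_surj x0 z0 xz v w.
by exists A; rewrite // inE HA e1 eqxx.
Qed.

Lemma card_coset x v : x != 0 -> #|coset x v| = (2 ^ n)%N.
Proof.
move=> x0; have [z zZ] := Zs_ex x0.
have [fi fs] := coset_img v x0 zZ.
by rewrite -(card_in_imset fi) fs cardsT cardV.
Qed.

Lemma card_invs x v : x != 0 -> v != 0 -> #|invs x v| = 2%N.
Proof.
move=> x0 v0.
have e1 : #|sings x v| = (2 ^ n - 2)%N.
  by rewrite sings_eq // card_in_imset ?card_Zs //; apply: lam_inj.
have := cardsID [set A : M | A \in unitmx] (coset x v).
have -> : coset x v :&: [set A : M | A \in unitmx] = invs x v.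
  by apply/setP => A; rewrite !inE.
have -> : coset x v :\: [set A : M | A \in unitmx] = sings x v.
  by apply/setP => A; rewrite !inE andbC.
rewrite e1 card_coset //.
have : (4 <= 2 ^ n)%N by rewrite -[4%N]/(2 ^ 2)%N leq_exp2l // n1.
move: (2 ^ n)%N => N; rewrite /= => H1 H2.
apply/eqP; rewrite -(eqn_add2r (N - 2)) H2; apply/eqP; lia.
Qed.

Lemma sum_coset x v : x != 0 -> \sum_(A in coset x v) A = 0.
Proof.
move=> x0; set F := \sum_(A in coset x v) A.
have FC : F \in C.
  rewrite /F; apply: (big_ind (fun A => A \in C)); first exact: C0.
    by move=> ? ? ? ?; apply: Cadd.
  by move=> A; rewrite inE => /andP [].
have [z zZ] := Zs_ex x0; move: (zZ); rewrite inE => /andP [z0 zx].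
have xz : x != z by rewrite eq_sym.
apply: (psi_inj x0 z0 xz FC C0); rewrite mulmx0.
  rewrite /F mulmx_sumr (eq_bigr (fun _ => v)); last by move=> A; rewrite inE => /andP [_ /eqP].
  by rewrite sumr_const card_coset // mxnat2.
have [fi fs] := coset_img v x0 zZ.
rewrite /F mulmx_sumr -(big_imset (fun w => w) fi) /= fs.
transitivity (\sum_(w : V) w); last exact: sum_rV n1.
by apply: eq_bigl => w; rewrite in_setT.
Qed.

Definition Lam (x v : V) : M := \sum_(z in Zs x) lam x z v.

Lemma LamD x v v' : x != 0 -> Lam x (v + v') = Lam x v + Lam x v'.
Proof.
move=> x0; rewrite /Lam -big_split /=; apply: eq_bigr => z zZ; exact: lamD.
Qed.

Lemma sum_invs x v : x != 0 -> v != 0 -> \sum_(A in invs x v) A = Lam x v.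
Proof.
move=> x0 v0.
have := sum_coset v x0; rewrite (bigID (fun A => A \in unitmx)) /=.
have -> : \sum_(i in coset x v | i \in unitmx) i = \sum_(A in invs x v) A.
  by apply: eq_bigl => A; rewrite !inE.
have -> : \sum_(i in coset x v | i \notin unitmx) i = \sum_(A in sings x v) A.
  by apply: eq_bigl => A; rewrite !inE.
rewrite sings_eq // big_imset /=; last exact: lam_inj.
move/eqP; rewrite mxadd_eq0 => /eqP.
by [].
Qed.

Lemma invs2 x v P Q : x != 0 -> v != 0 -> P \in invs x v -> Q \in invs x v -> P != Q ->
  invs x v = [set P; Q].
Proof.
move=> x0 v0 HP HQ PQ; apply/eqP; rewrite eq_sym eqEcard card_invs // cards2 PQ leqnn andbT.
by apply/subsetP => A; rewrite in_set2 => /orP [] /eqP ->.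
Qed.

Lemma Lam_pair x v P Q : x != 0 -> v != 0 -> P \in invs x v -> Q \in invs x v -> P != Q ->
  Lam x v = P + Q.
Proof.
move=> x0 v0 HP HQ PQ; rewrite -sum_invs // (invs2 x0 v0 HP HQ PQ).
rewrite big_setU1 /= ?big_set1 // inE; exact: PQ.
Qed.

Lemma Lam_nz x v : x != 0 -> v != 0 -> Lam x v != 0.
Proof.
move=> x0 v0; have /cards2P [P [Q [PQ E]]] : #|invs x v| == 2%N by rewrite card_invs.
have HP : P \in invs x v by rewrite E !inE eqxx.
have HQ : Q \in invs x v by rewrite E !inE eqxx orbT.
by rewrite (Lam_pair x0 v0 HP HQ PQ) mxadd_eq0.
Qed.

Lemma key (x : V) (P Q A D : M) : x != 0 ->
  P \in C -> Q \in C -> A \in C -> D \in C ->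
  P \in unitmx -> Q \in unitmx -> A \in unitmx -> D \in unitmx ->
  P != Q -> A != D -> x *m P = x *m Q -> x *m A = x *m D -> P + Q = A + D ->
  x *m P = x *m A.
Proof.
move=> x0 HP HQ HA HD uP uQ uA uD PQ AD e1 e2 e.
have vnz : forall B, B \in unitmx -> x *m B != 0.
  by move=> B uB; apply: contra x0 => /eqP /(unit_ker uB) ->.
have iP : P \in invs x (x *m P) by rewrite !inE HP eqxx uP.
have iQ : Q \in invs x (x *m P) by rewrite !inE HQ e1 eqxx uQ.
have iA : A \in invs x (x *m A) by rewrite !inE HA eqxx uA.
have iD : D \in invs x (x *m A) by rewrite !inE HD e2 eqxx uD.
have L1 := Lam_pair x0 (vnz _ uP) iP iQ PQ.
have L2 := Lam_pair x0 (vnz _ uA) iA iD AD.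
apply/eqP; rewrite -mxadd_eq0; apply/negPn/negP => nz.
have := Lam_nz x0 nz; rewrite LamD // L1 L2 e mxaddxx eqxx.
by [].
Qed.

Definition Is := [set A in C | A \in unitmx].
Definition R (A B : M) := [&& A \in Is, B \in Is & (A == B) || (A + B \in unitmx)].

Lemma vnz (x : V) (B : M) : x != 0 -> B \in unitmx -> x *m B != 0.
Proof. by move=> x0 uB; apply: contra x0 => /eqP /(unit_ker uB) ->. Qed.

Lemma R_sym A B : R A B = R B A.
Proof. by rewrite /R andbCA eq_sym addrC. Qed.

Lemma R_refl A : A \in Is -> R A A.
Proof. by move=> iA; rewrite /R iA eqxx. Qed.

Lemma R_trans A B D : R A B -> R B D -> R A D.
Proof.
case/and3P => iA iB ab; case/and3P => _ iD bd; rewrite /R iA iD /=.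
case: (A =P D) => [->|AD] //=.
case/orP: ab => [/eqP AB|uAB].
  by subst B; case/orP: bd => // /eqP E; case: AD.
case/orP: bd => [/eqP BD|uBD]; first by subst D.
apply/negPn/negP => nu.
have [x [x0 xAD]] := nonunit_ker nu.
move: iA iB iD; rewrite !inE => /andP [HA uA] /andP [HB uB] /andP [HD uD].
have xAD' : x *m A = x *m D by apply/eqP; rewrite -mxadd_eq0 -mulmxDr xAD.
have PQ : A + B != B + D.
  apply/negP => /eqP E; apply: AD; apply: (addIr B); by rewrite E addrC.
have e1 : x *m (A + B) = x *m (B + D) by rewrite !mulmxDr xAD' addrC.
have e2 : (A + B) + (B + D) = A + D by rewrite addrA -(addrA A) mxaddxx addr0.
have HAB : A + B \in C by apply: Cadd.
have HBD : B + D \in C by apply: Cadd.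
have := key x0 HAB HBD HA HD uAB uBD uA uD PQ (introN eqP AD) e1 xAD' e2.
rewrite mulmxDr => /(congr1 (fun t => t - x *m A)).
rewrite [x *m A + _]addrC addrK subrr => xB.
by move: (vnz x0 uB); rewrite xB eqxx.
Qed.

Definition T (A : M) := [set B in C | (B == 0) || R A B].

Lemma T_unit A B : B \in T A -> B != 0 -> B \in unitmx.
Proof.
rewrite inE => /andP [_ /orP [/eqP ->|]]; first by rewrite eqxx.
by case/and3P => _; rewrite inE => /andP [].
Qed.

Lemma T_add A B D : A \in Is -> B \in T A -> D \in T A -> B + D \in T A.
Proof.
move=> iA; rewrite !inE => /andP [HB bB] /andP [HD dD].
rewrite (Cadd HB HD) andTb.
case/orP: bB => [/eqP ->|rB]; first by rewrite add0r.
case/orP: dD => [/eqP ->|rD]; first by rewrite addr0 rB orbT.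
case: (B =P D) => [->|BD]; first by rewrite mxaddxx eqxx.
have rBD : R B D by apply: (R_trans _ rD); rewrite R_sym.
have uBD : B + D \in unitmx.
  by move: rBD => /and3P [_ _ /orP [/eqP E|//]]; case: BD.
have rB2 : R B (B + D).
  move: rBD => /and3P [iB iD _].
  rewrite /R iB inE (Cadd HB HD) uBD addrA mxaddxx add0r.
  by move: iD; rewrite inE => /andP [_ ->]; rewrite orbT.
by rewrite (R_trans rB rB2) orbT.
Qed.

Lemma T_inj (x : V) A : x != 0 -> A \in Is -> {in T A &, injective (mulmx x)}.
Proof.
move=> x0 iA B D HB HD e; apply/eqP; rewrite -mxadd_eq0; apply/negPn/negP => nz.
have u := T_unit (T_add iA HB HD) nz.
by move: (vnz x0 u); rewrite mulmxDr e mxaddxx eqxx.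
Qed.

Definition x0 : V := const_mx 1.

Lemma x0_nz : x0 != 0.
Proof.
apply/negP => /eqP /matrixP /(_ 0 (Ordinal n0)); rewrite !mxE => E.
by move: (@oner_neq0 'F_2); rewrite E eqxx.
Qed.

Lemma zero_nunit : (0 : M) \notin unitmx.
Proof. by apply/negP => u; move: (vnz x0_nz u); rewrite mulmx0 eqxx. Qed.

Lemma card_T_le A : A \in Is -> (#|T A| <= 2 ^ n)%N.
Proof.
move=> iA; rewrite -(card_in_imset (T_inj x0_nz iA)) -(cardV n); exact: max_card.
Qed.

Lemma card_Is : #|Is| = (2 * (2 ^ n - 1))%N.
Proof.
rewrite -sum1_card (partition_big (mulmx x0) predT) //=.
rewrite (eq_bigr (fun v => #|invs x0 v|)); last first.
  move=> v _; rewrite -sum1_card; apply: eq_bigl => B; by rewrite !inE andbAC.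
rewrite (bigD1 0) //=.
have -> : #|invs x0 0| = 0%N.
  apply/eqP; rewrite cards_eq0; apply/eqP/setP => B; rewrite !inE.
  apply/negP => /andP [/andP [_ /eqP xB] uB]; by move: (vnz x0_nz uB); rewrite xB eqxx.
rewrite add0n (eq_bigr (fun _ => 2%N)); last by move=> v v0; rewrite card_invs // x0_nz.
rewrite sum_nat_cond_const mulnC; congr (_ * _)%N.
have -> : [set x | true && (x != 0)] = [set~ (0 : V)] by apply/setP => v; rewrite !inE.
by rewrite cardsC1 cardV subn1.
Qed.

Definition kv (N : M) : V := odflt 0 [pick z | (z != 0) && (z *m N == 0)].

Lemma kv_spec N : N \notin unitmx -> kv N != 0 /\ kv N *m N = 0.
Proof.
move=> nu; rewrite /kv; case: pickP => [z /andP [z0 /eqP e]|H] //=.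
have [z [z0 e]] := nonunit_ker nu.
by move: (H z); rewrite z0 e eqxx.
Qed.

Definition U A := [set B in Is | ~~ R A B].
Definition cls A := [set B in Is | R A B].

Lemma card_U_le A : A \in Is -> (#|U A| <= 2 ^ n - 1)%N.
Proof.
move=> iA.
have nuU : forall B, B \in U A -> A + B \notin unitmx /\ A != B.
  move=> B; rewrite inE => /andP [iB]; rewrite /R iA iB /= negb_or => /andP [].
  by [].
have fi : {in U A &, injective (fun B => kv (A + B))}.
  move=> B D HB HD /= e.
  have [nuB AB] := nuU B HB; have [nuD AD] := nuU D HD.
  have [z0 zB] := kv_spec nuB; have [_ zD] := kv_spec nuD.
  rewrite -e in zD.
  move: iA HB HD; rewrite !inE => /andP [HA uA] /andP [/andP [HB' uB] _] /andP [/andP [HD' uD] _].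
  set z := kv (A + B) in z0 zB zD.
  have zAB : z *m A = z *m B by apply/eqP; rewrite -mxadd_eq0 -mulmxDr zB.
  have zAD : z *m A = z *m D by apply/eqP; rewrite -mxadd_eq0 -mulmxDr zD.
  have vA := vnz z0 uA.
  have iA' : A \in invs z (z *m A) by rewrite !inE HA eqxx uA.
  have iB' : B \in invs z (z *m A) by rewrite !inE HB' zAB eqxx uB.
  have iD' : D \in invs z (z *m A) by rewrite !inE HD' zAD eqxx uD.
  move: iD'; rewrite (invs2 z0 vA iA' iB' AB) !inE => /orP [/eqP DA|/eqP //].
  by move: AD; rewrite DA eqxx.
rewrite -(card_in_imset fi).
have -> : (2 ^ n - 1)%N = #|[set~ (0 : V)]| by rewrite cardsC1 cardV subn1.
apply: subset_leq_card; apply/subsetP => z /imsetP [B HB ->].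
rewrite !inE; have [nuB _] := nuU B HB; by have [] := kv_spec nuB.
Qed.

Lemma card_T A : A \in Is -> #|T A| = (2 ^ n)%N.
Proof.
move=> iA; apply/eqP; rewrite eqn_leq card_T_le //=.
have E1 : Is :&: [set B | R A B] = cls A by apply/setP => B; rewrite !inE.
have E2 : Is :\: [set B | R A B] = U A by apply/setP => B; rewrite !inE andbC.
have e1 := cardsID [set B | R A B] Is; rewrite E1 E2 card_Is in e1.
have -> : T A = 0 |: cls A.
  apply/setP => B; rewrite !inE; case: (B =P 0) => [->|_]; first by rewrite C0.
  rewrite !orFb; case rAB: (R A B); rewrite ?andbF ?andbT //.
  by move: rAB => /and3P [_]; rewrite inE => /andP [-> ->].
rewrite cardsU1.
have -> : (0 : M) \notin cls A by rewrite !inE negb_and negb_and zero_nunit !orbT.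
have := card_U_le iA.
have : (1 <= 2 ^ n)%N by rewrite expn_gt0.
move: (2 ^ n)%N e1 => N; rewrite -[true : nat]/1%N.
set c := #|cls A|; set u := #|U A|; clearbody c u; lia.
Qed.

Lemma pair_ex : exists P Q, [/\ P \in Is, Q \in Is & ~~ R P Q].
Proof.
have /cards2P [P [Q [PQ E]]] : #|invs x0 x0| == 2%N by rewrite card_invs // x0_nz.
have : P \in invs x0 x0 by rewrite E !inE eqxx.
have : Q \in invs x0 x0 by rewrite E !inE eqxx orbT.
rewrite !inE => /andP [/andP [HQ /eqP xQ] uQ] /andP [/andP [HP /eqP xP] uP].
have nu : P + Q \notin unitmx.
  apply/negP => u; move: (vnz x0_nz u); by rewrite mulmxDr xP xQ mxaddxx eqxx.
exists P, Q; split; rewrite ?inE ?HP ?uP ?HQ ?uQ //.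
by rewrite /R (negbTE PQ) (negbTE nu) orbF !andbF.
Qed.

Lemma T_sub A : T A \subset C.
Proof. by apply/subsetP => B; rewrite inE => /andP []. Qed.

Lemma T_full A : A \in Is -> forall a : V, exists2 s, s \in T A & x0 *m s = a.
Proof.
move=> iA a.
have fi := T_inj x0_nz iA.
have : mulmx x0 @: T A = setT.
  apply/eqP; rewrite eqEcard subsetT cardsT cardV card_in_imset // card_T //.
  by rewrite leqnn.
by move/setP/(_ a); rewrite in_setT => /imsetP [s Hs ->]; exists s.
Qed.

Lemma decomp P Q : P \in Is -> Q \in Is -> ~~ R P Q ->
  forall N, N \in C -> exists s t, [/\ s \in T P, t \in T Q & N = s + t].
Proof.
move=> iP iQ nR N HN.
have disj : forall B, B \in T P -> B \in T Q -> B = 0.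
  move=> B HBP HBQ; apply/eqP; apply/negPn/negP => nz.
  have rPB : R P B.
    move: HBP; rewrite inE => /andP [_ /orP [/eqP E|]]; last by [].
    by exfalso; move: nz; rewrite E eqxx.
  have rQB : R Q B.
    move: HBQ; rewrite inE => /andP [_ /orP [/eqP E|]]; last by [].
    by exfalso; move: nz; rewrite E eqxx.
  rewrite R_sym in rQB.
  by move: nR; rewrite (R_trans rPB rQB).
pose f (p : M * M) := p.1 + p.2.
pose D := setX (T P) (T Q).
have fi : {in D &, injective f}.
  move=> [s t] [s' t']; rewrite !in_setX /f /= => /andP [Hs Ht] /andP [Hs' Ht'] e.
  have : (s + s') + (t + t') = 0 by rewrite addrACA e mxaddxx.
  move/eqP; rewrite mxadd_eq0 => /eqP e2.
  have z : s + s' = 0.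
    apply: disj; first exact: T_add iP Hs Hs'.
    by rewrite e2; exact: T_add iQ Ht Ht'.
  have ss : s = s' by apply/eqP; rewrite -mxadd_eq0 z.
  have tt : t = t' by apply/eqP; rewrite -mxadd_eq0 -e2 z.
  by rewrite ss tt.
have : f @: D = C.
  apply/eqP; rewrite eqEcard; apply/andP; split.
    apply/subsetP => B /imsetP [[s t]]; rewrite in_setX /f /= => /andP [Hs Ht] ->.
    exact: (Cadd (subsetP (T_sub P) s Hs) (subsetP (T_sub Q) t Ht)).
  rewrite Ccard (card_in_imset fi) cardsX.
  apply: (@leq_trans (2 ^ n * 2 ^ n)%N); first by rewrite -expnD addnn mul2n leqnn.
  apply: leq_mul; [exact: eq_leq (esym (card_T iP))|exact: eq_leq (esym (card_T iQ))].
move=> fs; have : N \in f @: D by rewrite fs.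
case/imsetP => [[s t]]; rewrite in_setX /f /= => /andP [Hs Ht] ->.
by exists s, t.
Qed.

Definition L A (a : V) : M := odflt 0 [pick s in T A | x0 *m s == a].

Lemma L_spec A a : A \in Is -> L A a \in T A /\ x0 *m L A a = a.
Proof.
move=> iA; rewrite /L; case: pickP => [s /andP [Hs /eqP e] | H] //=.
have [s Hs e] := T_full iA a.
by move: (H s); rewrite Hs e eqxx.
Qed.

Lemma L_uniq A a s : A \in Is -> s \in T A -> x0 *m s = a -> s = L A a.
Proof.
move=> iA Hs e; have [l1 l2] := L_spec a iA.
by apply: (T_inj x0_nz iA Hs l1); rewrite e l2.
Qed.

Lemma presemi A : A \in Is -> presemifield (fun a x => x *m L A a).
Proof.
move=> iA; split.
- by move=> a x y; rewrite mulmxDl.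
- move=> a b x; have [a1 a2] := L_spec a iA; have [b1 b2] := L_spec b iA.
  have e : L A a + L A b = L A (a + b).
    by apply: (L_uniq iA (T_add iA a1 b1)); rewrite mulmxDr a2 b2.
  by rewrite -e mulmxDr.
- move=> a x e; case: (a =P 0) => [->|a0]; first by left.
  right; have [l1 l2] := L_spec a iA.
  have nz : L A a != 0 by apply/negP => /eqP E; apply: a0; rewrite -l2 E mulmx0.
  exact: (unit_ker (T_unit l1 nz) e).
Qed.

Lemma main_sec :
  (exists (star circ : 'rV['F_2]_n -> 'rV['F_2]_n -> 'rV['F_2]_n),
      [/\ presemifield star, presemifield circ &
          forall A : 'M['F_2]_n,
            A \in C <-> exists a b, forall x, x *m A = star a x - circ b x])
  /\
  (exists C' : {set 'M['F_2]_n},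
      [/\ C' \subset C, add_closed_set C', #|C'| = (2 ^ n)%N &
          forall A, A \in C' -> A != 0 -> A \in unitmx]).
Proof.
have [P [Q [iP iQ nR]]] := pair_ex.
split.
  exists (fun a x => x *m L P a), (fun b x => x *m L Q b).
  split; [exact: presemi|exact: presemi|].
  move=> N; split.
    move=> HN; have [s [t [Hs Ht ->]]] := decomp iP iQ nR HN.
    exists (x0 *m s), (x0 *m t) => x.
    by rewrite -(L_uniq iP Hs erefl) -(L_uniq iQ Ht erefl) mxopp2 mulmxDr.
  move=> [a [b H]].
  have -> : N = L P a + L Q b.
    by apply/row_matrixP => i; rewrite !rowE H mxopp2 mulmxDr.
  have [l1 _] := L_spec a iP; have [m1 _] := L_spec b iQ.
  exact: (Cadd (subsetP (T_sub P) _ l1) (subsetP (T_sub Q) _ m1)).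
exists (T P); split.
- exact: T_sub.
- by move=> B D HB HD; apply: T_add.
- exact: card_T.
- by move=> B HB nz; apply: T_unit HB nz.
Qed.

End Main.

Theorem mainTheorem1 (n : nat) (C : {set 'M['F_2]_n}) :
  (0 < n)%N ->
  add_closed_set C ->
  #|C| = (2 ^ (2 * n))%N ->
  (forall A, A \in C -> A != 0 -> (n.-1 <= \rank A)%N) ->
  (exists (star circ : 'rV['F_2]_n -> 'rV['F_2]_n -> 'rV['F_2]_n),
      [/\ presemifield star, presemifield circ &
          forall A : 'M['F_2]_n,
            A \in C <-> exists a b, forall x, x *m A = star a x - circ b x])
  /\
  (exists C' : {set 'M['F_2]_n},
      [/\ C' \subset C, add_closed_set C', #|C'| = (2 ^ n)%N &
          forall A, A \in C' -> A != 0 -> A \in unitmx]).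
Proof.
move=> n0 Cadd Ccard Crank; exact: (main_sec n0 Cadd Ccard Crank).
Qed.
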